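(* Let $A,B\in\mathbb{C}^{m\times n}$ and let $Q_A=A^\dagger A$. The following are equivalent: (a) $A\le^{\diamond}B$; (b) $\operatorname{rk}(B^\dagger-A^\dagger)=\operatorname{rk}((I_n-Q_A)B^\dagger)$ and $\mathcal{R}(A^* )\subseteq\mathcal{R}(B^* )$; (c) there exists an idempotent matrix $Q\in\mathbb{C}^{n\times n}$ with $A^\dagger=QB^\dagger$, and $\mathcal{R}(A^* )\subseteq\mathcal{R}(B^* )$.
   Context: For a matrix $M$, $M^*$ is its conjugate transpose, $M^\dagger$ its Moore–Penrose inverse, $\mathcal{R}(M)$ its column space, $\operatorname{rk}(M)$ its rank. Diamond partial order: for $A,B\in\mathbb{C}^{m\times n}$, $A\le^{\diamond}B$ means $\mathcal{R}(A)\subseteq\mathcal{R}(B)$, $\mathcal{R}(A^* )\subseteq\mathcal{R}(B^* )$, and $AB^*A=AA^*A$. *)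

(* Defs.v *)
(* Complex matrices over an arbitrary numeric closed field C
   (e.g. algC, or R[i] for R real closed); conjugation is Num.conj (x^* ). *)
From HB Require Import structures.
From mathcomp Require Import all_boot all_order all_algebra.
Set Implicit Arguments. Unset Strict Implicit. Unset Printing Implicit Defensive.
Import Order.TTheory GRing.Theory Num.Theory.
Local Open Scope ring_scope.

Definition ctmx (C : numClosedFieldType) m n (M : 'M[C]_(m, n)) : 'M[C]_(n, m) :=
  (map_mx Num.conj M)^T.

Definition is_MP (C : numClosedFieldType) m n (A : 'M[C]_(m, n)) (X : 'M[C]_(n, m)) : Prop :=
  [/\ A *m X *m A = A,
      X *m A *m X = X,
      ctmx (A *m X) = A *m X &
      ctmx (X *m A) = X *m A].

(* column-space inclusion R(A) \subseteq R(B); mathcomp's <=%MS is on row spaces *)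
Definition colspace_sub (C : numClosedFieldType) m n p (A : 'M[C]_(m, n)) (B : 'M[C]_(m, p)) : bool :=
  (A^T <= B^T)%MS.

Definition diamond_le (C : numClosedFieldType) m n (A B : 'M[C]_(m, n)) : Prop :=
  [/\ colspace_sub A B, colspace_sub (ctmx A) (ctmx B) & A *m ctmx B *m A = A *m ctmx A *m A].

(* Main.v *)
Require Import Defs.
From mathcomp Require Import all_boot all_order all_algebra.
Import GRing.Theory Num.Theory.
Local Open Scope ring_scope.

Lemma ctmxM {C : numClosedFieldType} m n p (A : 'M[C]_(m,n)) (B : 'M[C]_(n,p)) :
  ctmx (A *m B) = ctmx B *m ctmx A.
Proof. by rewrite /ctmx map_mxM trmx_mul. Qed.
Lemma ctmxK {C : numClosedFieldType} m n (A : 'M[C]_(m,n)) : ctmx (ctmx A) = A.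
Proof. by apply/matrixP=> i j; rewrite /ctmx !mxE conjCK. Qed.

Lemma MP_facts {C : numClosedFieldType} {m n} (A : 'M[C]_(m,n)) X :
  is_MP A X ->
  [/\ X = ctmx A *m ctmx X *m X, X = X *m ctmx X *m ctmx A,
      A = ctmx X *m ctmx A *m A & A = A *m ctmx A *m ctmx X].
Proof.
case=> h1 h2 h3 h4; split.
- by rewrite -ctmxM h4 h2.
- by rewrite -mulmxA -ctmxM h3 mulmxA h2.
- by rewrite -ctmxM h3 h1.
- by rewrite -mulmxA -ctmxM h4 mulmxA h1.
Qed.

Lemma rfix {C : numClosedFieldType} {a b c} (X W : 'M[C]_(a,b)) (B : 'M[C]_(b,c)) Y :
  Y *m B *m Y = Y -> X = W *m (B *m Y) -> X *m B *m Y = X.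
Proof. by move=> hY ->; rewrite -!mulmxA (mulmxA Y) hY. Qed.
Lemma lfix {C : numClosedFieldType} {a b c} (X W : 'M[C]_(b,a)) (B : 'M[C]_(c,b)) Y :
  Y *m B *m Y = Y -> X = (Y *m B) *m W -> Y *m B *m X = X.
Proof. by move=> hY ->; rewrite !mulmxA hY. Qed.

Lemma L1 {C : numClosedFieldType} {m n} {A B : 'M[C]_(m,n)} {X Y} :
  is_MP A X -> is_MP B Y -> A *m Y *m B = A -> Y *m B *m X = X.
Proof.
move=> hA [_ hB2 _ hB4] S; have [d1 _ _ _] := MP_facts _ _ hA.
apply: (lfix _ (ctmx A *m ctmx X *m X) _ _ hB2).
by rewrite {1}d1 -{1}S !ctmxM mulmxA -ctmxM hB4 !mulmxA.
Qed.

Lemma L2a {C : numClosedFieldType} {m n} {A B : 'M[C]_(m,n)} {X Y} :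
  is_MP A X -> is_MP B Y -> B *m Y *m A = A -> X *m B *m Y = X.
Proof.
move=> hA [_ hB2 hB3 _] S; have [_ d2 _ _] := MP_facts _ _ hA.
apply: (rfix _ (X *m ctmx X *m ctmx A) _ _ hB2).
by rewrite {1}d2 -{1}S !ctmxM mulmxA -ctmxM hB3 !mulmxA.
Qed.

Lemma L2b {C : numClosedFieldType} {m n} {A B : 'M[C]_(m,n)} {X Y} :
  is_MP A X -> is_MP B Y -> X *m B *m Y = X -> B *m Y *m A = A.
Proof.
move=> hA [hB1 _ hB3 _] S; have [_ _ d3 _] := MP_facts _ _ hA.
apply: (lfix _ (ctmx X *m ctmx A *m A) _ _ hB1).
by rewrite {1}d3 -{1}S !ctmxM mulmxA -ctmxM hB3 !mulmxA.
Qed.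

Lemma L3a {C : numClosedFieldType} {m n} {A B : 'M[C]_(m,n)} {X} :
  is_MP A X -> A *m ctmx B *m A = A *m ctmx A *m A -> X *m B *m X = X.
Proof.
move=> hA E; have [d1 d2 _ _] := MP_facts _ _ hA.
have E' : ctmx A *m B *m ctmx A = ctmx A *m A *m ctmx A.
  by move: (congr1 (@ctmx C _ _) E); rewrite !ctmxM !ctmxK !mulmxA.
transitivity ((X *m ctmx X *m ctmx A) *m B *m (ctmx A *m ctmx X *m X)).
  by rewrite -d1 -d2.
transitivity (X *m ctmx X *m (ctmx A *m B *m ctmx A) *m ctmx X *m X).
  by rewrite !mulmxA.
rewrite E'.
transitivity ((X *m ctmx X *m ctmx A) *m A *m (ctmx A *m ctmx X *m X)).
  by rewrite !mulmxA.
by rewrite -d1 -d2; case: hA.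
Qed.

Lemma L3b {C : numClosedFieldType} {m n} {A B : 'M[C]_(m,n)} {X} :
  is_MP A X -> X *m B *m X = X -> A *m ctmx B *m A = A *m ctmx A *m A.
Proof.
move=> hA E; have [_ _ d3 d4] := MP_facts _ _ hA.
have E' : ctmx X *m ctmx B *m ctmx X = ctmx X.
  by rewrite -{3}E !ctmxM mulmxA.
transitivity ((A *m ctmx A *m ctmx X) *m ctmx B *m (ctmx X *m ctmx A *m A)).
  by rewrite -d3 -d4.
transitivity (A *m ctmx A *m (ctmx X *m ctmx B *m ctmx X) *m ctmx A *m A).
  by rewrite !mulmxA.
rewrite E'.
transitivity (A *m ctmx A *m (ctmx X *m ctmx A *m A)).
  by rewrite !mulmxA.
by rewrite -d3.
Qed.

Lemma colsubP {C : numClosedFieldType} m n p (M : 'M[C]_(m,n)) (N : 'M[C]_(m,p)) :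
  colspace_sub M N <-> exists D, M = N *m D.
Proof.
rewrite /colspace_sub; split.
- by case/submxP=> D hD; exists D^T; rewrite -[M]trmxK hD trmx_mul trmxK.
- by case=> D ->; rewrite trmx_mul submxMl.
Qed.

Lemma E1 {C : numClosedFieldType} {m n} {A B : 'M[C]_(m,n)} {Y} :
  is_MP B Y -> (colspace_sub A B <-> B *m Y *m A = A).
Proof.
case=> hB1 _ _ _; split.
- by case/colsubP=> D ->; rewrite !mulmxA hB1.
- by move=> <-; apply/colsubP; exists (Y *m A); rewrite mulmxA.
Qed.

Lemma E2 {C : numClosedFieldType} {m n} {A B : 'M[C]_(m,n)} {Y} :
  is_MP B Y -> (colspace_sub (ctmx A) (ctmx B) <-> A *m Y *m B = A).
Proof.
case=> hB1 _ _ _; split.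
- case/colsubP=> D hD; have -> : A = ctmx D *m B by rewrite -[A]ctmxK hD ctmxM ctmxK.
  by rewrite -!mulmxA (mulmxA B) hB1.
- by move=> hA; apply/colsubP; exists (ctmx (A *m Y)); rewrite -ctmxM hA.
Qed.

Lemma K {C : numClosedFieldType} {m n} {A B : 'M[C]_(m,n)} {X Y} :
  is_MP A X -> is_MP B Y -> A *m Y *m B = A ->
  (diamond_le A B <-> (X *m B *m Y = X /\ X *m B *m X = X)).
Proof.
move=> hA hB S; split.
- case=> c1 _ c3; split.
  + by apply: (L2a hA hB); apply/(E1 hB).
  + exact: (L3a hA c3).
- case=> e1 e2; split.
  + by apply/(E1 hB); apply: (L2b hA hB).
  + by apply/(E2 hB).
  + exact: (L3b hA e2).
Qed.

Lemma Fid {C : numClosedFieldType} {m n} {A : 'M[C]_(m,n)} {X} (Y : 'M[C]_(n,m)) :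
  is_MP A X -> (1%:M - X *m A) *m Y = (1%:M - X *m A) *m (Y - X).
Proof.
case=> _ h2 _ _.
by rewrite [in RHS]mulmxBr (mulmxBl 1%:M (X *m A) X) mul1mx h2 subrr subr0.
Qed.

Theorem corollary3p3 (C : numClosedFieldType) (m n : nat)
    (A B : 'M[C]_(m, n)) (Ad Bd : 'M[C]_(n, m)) :
  is_MP A Ad -> is_MP B Bd ->
  let QA := Ad *m A in
  (diamond_le A B <->
   (\rank (Bd - Ad) = \rank ((1%:M - QA) *m Bd) /\ colspace_sub (ctmx A) (ctmx B))) /\
  (diamond_le A B <->
   ((exists Q : 'M[C]_n, Q *m Q = Q /\ Ad = Q *m Bd) /\ colspace_sub (ctmx A) (ctmx B))).
Proof.
move=> hA hB QA; rewrite /QA.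
have [hB1 hB2 hB3 hB4] := hB.
have [hA1 hA2 hA3 hA4] := hA.
split; split.
- move=> D; have S : colspace_sub (ctmx A) (ctmx B) by case: D.
  split=> //; have S' := (E2 hB).1 S.
  have e3 : Bd *m B *m Ad = Ad := L1 hA hB S'.
  have [e1 e2] := (K hA hB S').1 D.
  rewrite (Fid _ hA); apply/eqP; rewrite eqn_leq mxrankM_maxr /=.
  set M := Bd - Ad.
  have hM : M = (M *m B) *m ((1%:M - Ad *m A) *m M).
    have z : M *m B *m Ad = 0 by rewrite /M mulmxBl mulmxBl e3 e2 subrr.
    rewrite (mulmxBl 1%:M (Ad *m A) M) mul1mx mulmxBr !mulmxA z !mul0mx subr0.
    by rewrite /M !mulmxBr !mulmxBl hB2 e1 e2 e3 subrr subr0.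
  by rewrite {1}hM mxrankM_maxr.
- case=> hr S; have S' := (E2 hB).1 S; apply/(K hA hB S').
  have e3 : Bd *m B *m Ad = Ad := L1 hA hB S'.
  have sub : ((1%:M - Ad *m A) *m (Bd - Ad) <= Bd - Ad)%MS by rewrite submxMl.
  have hF := Fid Bd hA.
  have hr' : \rank ((1%:M - Ad *m A) *m (Bd - Ad)) == \rank (Bd - Ad).
    by apply/eqP; exact: (etrans (congr1 (fun M => \rank M) (esym hF)) (esym hr)).
  have := (mxrank_leqif_eq sub).2; rewrite hr'.
  case/esym/andP=> _ /submxP [N hN0].
  have hN : Bd - Ad = N *m ((1%:M - Ad *m A) *m Bd) := etrans hN0 (congr1 (mulmx N) (esym hF)).
  have PX : (1%:M - Ad *m A) *m Ad = 0 by rewrite mulmxBl mul1mx hA2 subrr.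
  have hX : Ad = (1%:M - N *m (1%:M - Ad *m A)) *m Bd.
    by rewrite mulmxBl mul1mx -mulmxA -hN opprB addrC subrK.
  split.
  + by rewrite {1}hX -!mulmxA (mulmxA Bd) hB2 -hX.
  + have : (Bd - Ad) *m B *m Ad = 0.
      by rewrite hN -!mulmxA (mulmxA Bd) e3 PX mulmx0.
    by rewrite mulmxBl mulmxBl e3 => /eqP; rewrite subr_eq0 => /eqP <-.
- move=> D; have S : colspace_sub (ctmx A) (ctmx B) by case: D.
  split=> //; have S' := (E2 hB).1 S.
  have [e1 e2] := (K hA hB S').1 D.
  exists (Ad *m B); split; first by rewrite mulmxA e2.
  by rewrite e1.
- case=> [[Q [hQ hX]] S]; have S' := (E2 hB).1 S; apply/(K hA hB S').
  have e3 : Bd *m B *m Ad = Ad := L1 hA hB S'.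
  have e1 : Ad *m B *m Bd = Ad by rewrite hX -!mulmxA (mulmxA Bd) hB2.
  split=> //.
  by rewrite {1}hX -!mulmxA (mulmxA Bd) e3 {1}hX mulmxA hQ -hX.
Qed.
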